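(* For every constant $k>0$ there is a constant $K$ such that the following holds for all even $n$. Let $a$ be odd with $1\le a<n/2$, and let $y\in\{0,1\}^n$ with $\min\{|y|_1,n-|y|_1\}=a$. Let $N\ge N_a:=K a^{5/2}n^2/(n-2a)^{3/2}$. Independently $N$ times, sample an offspring of $y$ by flipping exactly $n/2-1$ positions chosen uniformly at random (without repetition), and let $Y$ be the number of offspring $z$ with $|z|_1=n/2$. Then, if $a\ge 3$, $$\Pr\big(Y\ge N(p_a+p_{a-2})/2\big)\le\exp\!\big(-k(n-2a)^{1/2}\big),$$ and if $a\le n/2-2$, $$\Pr\big(Y\le N(p_{a+2}+p_a)/2\big)\le\exp\!\big(-k(n-2a)^{1/2}\big).$$
   Context: For $x\in\{0,1\}^n$, $|x|_1=\sum_ix_i$. For odd $b$ with $1\le b\le n/2$, $p_b:=\binom{n-b}{(n-b-1)/2}\binom{b}{(b-1)/2}\big/\binom{n}{n/2-1}$; this is the probability that flipping exactly $n/2-1$ uniformly random positions of a string $x$ with $\min\{|x|_1,n-|x|_1\}=b$ yields a string with exactly $n/2$ ones. *)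

(* Defs.v *)
From Stdlib Require Import Reals.
From mathcomp Require Import all_boot.

Set Implicit Arguments.
Unset Strict Implicit.
Unset Printing Implicit Defensive.

Definition ones (n : nat) (x : {ffun 'I_n -> bool}) : nat := #|[set i | x i]|.

Definition flip (n : nat) (x : {ffun 'I_n -> bool}) (S : {set 'I_n}) :
  {ffun 'I_n -> bool} := [ffun i => xorb (x i) (i \in S)].

(* sample space of N independent offspring: N-tuples of subsets of
   positions, each of size n/2 - 1; the uniform distribution on it is
   exactly N independent uniform choices of n/2-1 distinct positions. *)
Definition offspring_space (n N : nat) : {set {ffun 'I_N -> {set 'I_n}}} :=
  [set f : {ffun 'I_N -> {set 'I_n}} | [forall i, #|f i| == (n./2).-1]].

Definition Ycount (n N : nat) (y : {ffun 'I_n -> bool})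
  (f : {ffun 'I_N -> {set 'I_n}}) : nat :=
  #|[set i : 'I_N | ones (flip y (f i)) == n./2]|.

Definition prob_event (n N : nat) (E : pred {ffun 'I_N -> {set 'I_n}}) : R :=
  Rdiv (INR #|[set f in offspring_space n N | E f]|)
       (INR #|offspring_space n N|).

Definition Rleb (x y : R) : bool := if Rle_dec x y then true else false.

Definition p_ (n b : nat) : R :=
  Rdiv (Rmult (INR 'C(n - b, (n - b).-1./2)) (INR 'C(b, b.-1./2)))
       (INR 'C(n, (n./2).-1)).

(* Main.v *)
Require Import Defs.
From Stdlib Require Import Reals Lra Lia.
From mathcomp Require Import all_boot zify.
From mathcomp Require Import Rstruct.
Set Implicit Arguments. Unset Strict Implicit.
Definition B m := 'C(m.*2, m).

Lemma B_rec m : B m.+1 * m.+1 = 2 * (2 * m + 1) * B m.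
Proof.
rewrite /B doubleS.
have h1 := mul_bin_diag m.*2.+2 m.
have h2 := mul_bin_down m.*2.+1 m.
simpl in h1, h2.
have e : m.*2.+1 - m = m.+1 by rewrite -addnn; lia.
rewrite e in h2.
move: h1 h2; set a := 'C(m.*2, m); set b := 'C(m.*2.+1, m); set c := 'C(m.*2.+2, m.+1).
move=> h1 h2.
apply/eqP; rewrite -(eqn_pmul2l (ltn0Sn m)); apply/eqP.
rewrite -doubleS -!muln2 in h1 h2 *.
nia.
Qed.

Lemma B_lo m : 0 < m -> 16 ^ m <= 4 * m * B m ^ 2.
Proof.
elim: m => // m IH _.
case: m IH => [|m] IH; first by rewrite /B.
have IH' := IH isT.
have r := B_rec m.+1.
move: IH' r; set X := 16 ^ m.+1; set b := B m.+1; set b' := B m.+2.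
move=> IH2 r.
rewrite expnS -/X.
have key : m.+2 * (16 * X) <= m.+2 * (4 * m.+2 * b' ^ 2).
  have e : m.+2 * (4 * m.+2 * b' ^ 2) = 4 * (b' * m.+2) ^ 2 by nia.
  rewrite e r.
  have : 16 * X * m.+2 <= 16 * (4 * m.+1 * b ^ 2) * m.+2.
    by rewrite leq_mul2r leq_mul2l IH2 orbT.
  nia.
by rewrite leq_pmul2l in key.
Qed.

Lemma B_up m : B m ^ 2 * (2 * m + 1) <= 16 ^ m.
Proof.
elim: m => [|m IH]; first by rewrite /B.
have r := B_rec m.
move: IH r; set X := 16 ^ m; set b := B m; set b' := B m.+1.
move=> IH2 r.
rewrite expnS -/X.
have key : m.+1 ^ 2 * (b' ^ 2 * (2 * m.+1 + 1)) <= m.+1 ^ 2 * (16 * X).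
  have e : m.+1 ^ 2 * (b' ^ 2 * (2 * m.+1 + 1)) = (b' * m.+1) ^ 2 * (2 * m.+1 + 1) by nia.
  rewrite e r.
  have : 4 * (2 * m + 1) * (2 * m + 3) * (b ^ 2 * (2 * m + 1)) <= 4 * (2 * m + 1) * (2 * m + 3) * X.
    by rewrite leq_mul2l IH2 orbT.
  nia.
have p : 0 < m.+1 ^ 2 by rewrite expn_gt0.
rewrite [16 ^ _]expnS -/X. by rewrite -(leq_pmul2l p).
Qed.

Lemma bin_odd m : 'C(m.*2.+1, m) * 2 = B m.+1.
Proof.
rewrite /B doubleS binS.
have -> : 'C(m.*2.+1, m.+1) = 'C(m.*2.+1, m).
  rewrite -bin_sub; last by rewrite -addnn; lia.
  congr 'C(_, _); rewrite -addnn; lia.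
by rewrite muln2 addnn.
Qed.

Lemma bin_cen M : 0 < M -> 'C(M.*2, M.-1) * M.+1 = M * B M.
Proof.
case: M => // M _.
have h := mul_bin_left M.+1.*2 M.
rewrite /B /= h.
have -> : M.+1.*2 - M = M.+2 by rewrite doubleS -addnn; lia.
by rewrite mulnC.
Qed.
Section Count.
Variable n : nat.

Lemma flip_card (A S : {set 'I_n}) :
  #|[set i | xorb (i \in A) (i \in S)]| + 2 * #|A :&: S| = #|A| + #|S|.
Proof.
set F := [set i | _].
have h1 := cardsID S F.
have e1 : F :&: S = S :\: A by apply/setP=> i; rewrite !inE; case: (i \in A); case: (i \in S).
have e2 : F :\: S = A :\: S by apply/setP=> i; rewrite !inE; case: (i \in A); case: (i \in S).
have h2 := cardsID A S. have h3 := cardsID S A.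
rewrite e1 e2 in h1. rewrite (setIC S A) in h2. lia.
Qed.

Lemma ones_flip (y : {ffun 'I_n -> bool}) S :
  ones (flip y S) + 2 * #|[set i | y i] :&: S| = ones y + #|S|.
Proof.
rewrite /ones -flip_card; congr (_ + _); apply: eq_card => i.
by rewrite !inE ffunE.
Qed.

Lemma sepL (A X Z : {set 'I_n}) : X \subset A -> Z \subset ~: A -> A :&: (X :|: Z) = X.
Proof.
move=> sX sZ; apply/setP=> i; rewrite !inE; case iX: (i \in X); first by rewrite (subsetP sX).
rewrite /=; case iA: (i \in A) => //=; apply/negbTE/negP => iZ.
by have := subsetP sZ i iZ; rewrite inE iA.
Qed.

Lemma sepR (A X Z : {set 'I_n}) : X \subset A -> Z \subset ~: A -> ~: A :&: (X :|: Z) = Z.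
Proof.
move=> sX sZ; apply/setP=> i; rewrite !inE; case iZ: (i \in Z).
  by rewrite orbT andbT; have := subsetP sZ i iZ; rewrite inE.
rewrite orbF; case iX: (i \in X); last by rewrite andbF.
by rewrite (subsetP sX _ iX).
Qed.

Lemma count_inter (A : {set 'I_n}) j r :
  #|[set S : {set 'I_n} | (#|S| == j + r) && (#|A :&: S| == j)]|
   = 'C(#|A|, j) * 'C(#|~: A|, r).
Proof.
pose P1 := [set X : {set 'I_n} | X \subset A & #|X| == j].
pose P2 := [set X : {set 'I_n} | X \subset ~: A & #|X| == r].
rewrite -!cards_draws -/P1 -/P2 -cardsX.
have -> : [set S : {set 'I_n} | (#|S| == j + r) && (#|A :&: S| == j)]
   = (fun p : {set 'I_n} * {set 'I_n} => p.1 :|: p.2) @: setX P1 P2.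
  apply/setP=> S; rewrite inE; apply/andP/imsetP.
  - move=> [/eqP hS /eqP hA]; exists (A :&: S, ~:A :&: S).
    + rewrite !inE subsetIl subsetIl /= hA eqxx /=.
      have h := cardsID A S. rewrite (setIC S A) hA hS setDE (setIC S) in h.
      apply/eqP; exact: (addnI h).
    + by rewrite /= -setIUl setUCr setTI.
  - move=> [[X Z]]; rewrite !inE /= => /andP [/andP [sX /eqP cX] /andP [sZ /eqP cZ]] ->.
    rewrite (sepL sX sZ) cX eqxx; split => //; rewrite cardsU.
    have -> : X :&: Z = set0.
      apply/setP=> i; rewrite !inE; apply/negbTE/negP=> /andP [iX iZ].
      by have := subsetP sZ i iZ; rewrite inE (subsetP sX i iX).
    by rewrite cards0 subn0 cX cZ.
rewrite card_in_imset //.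
move=> [X Z] [X' Z']; rewrite !inE /= => /andP [/andP [sX _] /andP [sZ _]] /andP [/andP [sX' _] /andP [sZ' _]] e.
have e1 := sepL sX sZ; have e2 := sepR sX sZ; rewrite e (sepL sX' sZ') (sepR sX' sZ') in e1 e2; by rewrite -e1 -e2.
Qed.
End Count.
Local Open Scope R_scope.
Lemma iter_pow x k : iter k (Rmult x) 1 = x ^ k.
Proof. by elim: k => //= k ->. Qed.

Lemma iter_add c k : iter k (Rplus c) 0 = INR k * c.
Proof. elim: k => [|k IH]; first by rewrite /= Rmult_0_l. rewrite iterS IH S_INR; ring. Qed.

Lemma sum_const (I : finType) (P : pred I) c :
  \big[Rplus/0]_(i | P i) c = INR #|P| * c.
Proof. by rewrite big_const iter_add. Qed.

Lemma sum_le (I : finType) (P : pred I) F G :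
  (forall i, P i -> F i <= G i) ->
  \big[Rplus/0]_(i | P i) F i <= \big[Rplus/0]_(i | P i) G i.
Proof. move=> h; apply: (big_ind2 Rle) => //; [lra | move=> *; lra]. Qed.

Lemma sum_ge0 (I : finType) (P : pred I) F :
  (forall i, P i -> 0 <= F i) -> 0 <= \big[Rplus/0]_(i | P i) F i.
Proof. move=> h; apply: (big_ind (Rle 0)) => //; [lra | move=> *; lra]. Qed.

Lemma sum_if (I : finType) (P g : pred I) x :
  \big[Rplus/0]_(i | P i) (if g i then x else 1)
  = INR #|P| + (x - 1) * INR #|[pred i | P i && g i]|.
Proof.
rewrite (eq_bigr (fun i => 1 + (if g i then x - 1 else 0))); last first.
  by move=> i _; case: (g i); lra.
rewrite big_split /= sum_const.
rewrite -big_mkcondr sum_const /= Rmult_1_r Rmult_comm; do 3 f_equal; exact: eq_card.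
Qed.

Lemma prod_if (I : finType) (P : pred I) x :
  \big[Rmult/1]_(i : I) (if P i then x else 1) = x ^ #|P|.
Proof. by rewrite -big_mkcond big_const iter_pow. Qed.

Lemma mgf n N (y : {ffun 'I_n -> bool}) x :
  \big[Rplus/0]_(f in offspring_space n N) x ^ (Ycount y f)
  = (\big[Rplus/0]_(S : {set 'I_n} | #|S| == (n./2).-1)
        (if ones (flip y S) == n./2 then x else 1)) ^ N.
Proof.
rewrite -[in RHS](card_ord N) -iter_pow -big_const.
rewrite bigA_distr_big.
apply: eq_big => [f|f _].
  rewrite inE; apply/forallP/ffun_onP => h i; move: (h i); by rewrite ?inE.
rewrite /Ycount cardsE -(prod_if _ x); by apply: eq_bigr => i _.
Qed.

Definition qq n (y : {ffun 'I_n -> bool}) : R :=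
  INR #|[pred S : {set 'I_n} | (#|S| == (n./2).-1) && (ones (flip y S) == n./2)]|
  / INR 'C(n, (n./2).-1).

Lemma cardTd n : #|[pred S : {set 'I_n} | #|S| == (n./2).-1]| = 'C(n, (n./2).-1).
Proof. by rewrite -cardsE card_draws card_ord. Qed.

Lemma tail_bound n N (y : {ffun 'I_n -> bool}) (E : pred {ffun 'I_N -> {set 'I_n}}) x c :
  (0 < 'C(n, (n./2).-1))%N -> 0 < x -> 0 < c ->
  (forall f, E f -> c <= x ^ Ycount y f) ->
  @prob_event n N E * c <= (1 + (x - 1) * qq y) ^ N.
Proof.
move=> hT hx hc hE.
set T := INR 'C(n, (n./2).-1).
have Tpos : 0 < T by apply: lt_0_INR; apply/ltP.
have hO : INR #|offspring_space n N| = T ^ N.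
  have := mgf N y 1; rewrite sum_if Rminus_diag Rmult_0_l Rplus_0_r cardTd -/T => <-.
  rewrite (eq_bigr (fun _ => 1)) ?sum_const; last by move=> f _; apply: pow1.
  by rewrite Rmult_1_r.
have hS : \big[Rplus/0]_(f in offspring_space n N) x ^ (Ycount y f)
          = T ^ N * (1 + (x - 1) * qq y) ^ N.
  rewrite mgf sum_if cardTd -/T -Rpow_mult_distr /qq; congr (_ ^ _).
  rewrite -/T /=; field; lra.
have hE2 : INR #|[set f in offspring_space n N | E f]| * c
           <= \big[Rplus/0]_(f in offspring_space n N) x ^ (Ycount y f).
  have -> : INR #|[set f in offspring_space n N | E f]| * c
      = \big[Rplus/0]_(i | (i \in offspring_space n N) && E i) c.
    by rewrite sum_const; congr (INR _ * _); apply: eq_card => f; rewrite inE.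
  rewrite [in X in _ <= X](bigID E) /=.
  have := sum_ge0 (P := fun i => (i \in offspring_space n N) && ~~ E i)
                  (F := fun i => x ^ Ycount y i) (fun i _ => pow_le _ _ (Rlt_le _ _ hx)).
  have := sum_le (P := fun i => (i \in offspring_space n N) && E i)
                 (F := fun _ => c) (G := fun i => x ^ Ycount y i)
                 (fun i hi => hE i (proj2 (andP hi))).
  move=> h1 h2. apply: (Rle_trans _ _ _ h1). rewrite -[X in X <= _]Rplus_0_r. by apply: Rplus_le_compat => //; apply: Rle_refl.
rewrite /prob_event hO.
have TN : 0 < T ^ N by apply: pow_lt.
rewrite hS in hE2.
apply: (Rmult_le_reg_l (T ^ N)) => //.
rewrite /Rdiv; field_simplify; try lra.
Qed.
Lemma ln_le_sub1 y : 0 < y -> ln y <= y - 1.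
Proof. move=> hy; have := exp_ineq1_le (ln y); rewrite exp_ln //; lra. Qed.

Lemma exp_pow_n u n : exp u ^ n = exp (INR n * u).
Proof.
elim: n => [|n IH]; first by rewrite /= Rmult_0_l exp_0.
rewrite S_INR /= IH -exp_plus; f_equal; ring.
Qed.

Lemma kl_up q s : 0 < q -> q <= s -> (s - q)^2 / (4 * s) <= s * ln (s / q) - s + q.
Proof.
move=> hq hqs.
have hs : 0 < s by lra.
set v := sqrt (q / s).
have hqs' : 0 < q / s by apply: Rdiv_lt_0_compat.
have vv : v * v = q / s by apply: sqrt_sqrt; lra.
have v0 : 0 < v by apply: sqrt_lt_R0.
have v1 : v <= 1.
  apply: Rnot_lt_le => h.
  have : 1 < q / s by rewrite -vv; nra.
  move=> h2; have : q > s; last lra.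
  apply: (Rmult_lt_reg_r (/ s)); first by apply: Rinv_0_lt_compat.
  rewrite Rinv_r; last lra. by rewrite -/(Rdiv q s).
have hl : ln (s / q) = - (2 * ln v).
  have -> : s / q = / (v * v) by rewrite vv; field; lra.
  rewrite ln_Rinv; last nra. rewrite ln_mult //; ring.
have lv := ln_le_sub1 v0.
have qe : q = s * (v * v) by rewrite vv; field; lra.
rewrite hl qe.
have hsq : (s - s * (v * v)) ^ 2 / (4 * s) = s * ((1 - v) * (1 - v)) * ((1 + v) * (1 + v) / 4).
  field; lra.
rewrite hsq.
have h1 : s * ((1 - v) * (1 - v)) * ((1 + v) * (1 + v) / 4) <= s * ((1 - v) * (1 - v)).
  have : (1 + v) * (1 + v) / 4 <= 1 by nra.
  have : 0 <= s * ((1 - v) * (1 - v)) by nra.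
  nra.
nra.
Qed.

Lemma kl_lo q s : 0 < s -> s <= q -> (q - s)^2 / (4 * q) <= s * ln (s / q) - s + q.
Proof.
move=> hs hqs.
have hq : 0 < q by lra.
set u := sqrt (s / q).
have hsq' : 0 < s / q by apply: Rdiv_lt_0_compat.
have uu : u * u = s / q by apply: sqrt_sqrt; lra.
have u0 : 0 < u by apply: sqrt_lt_R0.
have u1 : u <= 1.
  apply: Rnot_lt_le => h.
  have : 1 < s / q by rewrite -uu; nra.
  move=> h2; have : s > q; last lra.
  apply: (Rmult_lt_reg_r (/ q)); first by apply: Rinv_0_lt_compat.
  rewrite Rinv_r; last lra. by rewrite -/(Rdiv s q).
have hl : ln (s / q) = - (2 * ln (/ u)).
  rewrite -uu ln_mult // ln_Rinv //; ring.
have lv := ln_le_sub1 (Rinv_0_lt_compat _ u0).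
have se : s = q * (u * u) by rewrite uu; field; lra.
rewrite hl se.
have iu : u * / u = 1 by field; lra.
have hsq : (q - q * (u * u)) ^ 2 / (4 * q) = q * ((1 - u) * (1 - u)) * ((1 + u) * (1 + u) / 4).
  field; lra.
rewrite hsq.
have h1 : q * ((1 - u) * (1 - u)) * ((1 + u) * (1 + u) / 4) <= q * ((1 - u) * (1 - u)).
  have : (1 + u) * (1 + u) / 4 <= 1 by nra.
  have : 0 <= q * ((1 - u) * (1 - u)) by nra.
  nra.
have h2 : q * (u * u) * - (2 * ln (/ u)) >= q * (u * u) * - (2 * (/ u - 1)).
  have : 0 <= q * (u * u) by nra.
  nra.
have h3 : q * (u * u) * - (2 * (/ u - 1)) = - 2 * q * u + 2 * q * (u * u).
  field; lra.
nra.
Qed.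
Lemma exp_mono x y : x <= y -> exp x <= exp y.
Proof.
move=> h; case: (Rle_lt_or_eq_dec _ _ h) => [h'|->]; last by apply: Rle_refl.
by apply: Rlt_le; apply: exp_increasing.
Qed.

Lemma qq_le1 n (y : {ffun 'I_n -> bool}) : (0 < 'C(n, (n./2).-1))%N -> qq y <= 1.
Proof.
move=> hT; rewrite /qq.
have Tpos : 0 < INR 'C(n, (n./2).-1) by apply: lt_0_INR; apply/ltP.
apply: (Rmult_le_reg_r (INR 'C(n, (n./2).-1))) => //.
rewrite Rmult_1_l /Rdiv Rmult_assoc Rinv_l ?Rmult_1_r; last lra.
apply: le_INR; apply/leP; rewrite -cardTd.
apply: subset_leq_card; apply/subsetP => S; rewrite !inE => /andP [] //.
Qed.

Lemma chernoff_gen n N (y : {ffun 'I_n -> bool}) (E : pred {ffun 'I_N -> {set 'I_n}}) s :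
  (0 < 'C(n, (n./2).-1))%N -> 0 < qq y -> 0 < s ->
  (forall f, E f -> 0 <= (INR (Ycount y f) - INR N * s) * ln (s / qq y)) ->
  @prob_event n N E <= exp (- (INR N * (s * ln (s / qq y) - s + qq y))).
Proof.
move=> hT hq hs hE.
set q := qq y in hq hE *.
have hq1 : q <= 1 by apply: qq_le1.
set x := s / q in hE *.
have hx : 0 < x by apply: Rdiv_lt_0_compat.
set c := exp (INR N * s * ln x).
have hc : 0 < c by apply: exp_pos.
have hb := tail_bound hT hx hc.
have hE' : forall f, E f -> c <= x ^ Ycount y f.
  move=> f /hE h; rewrite -Rpower_pow // /Rpower /c; apply: exp_mono; nra.
have {}hb := hb N y E hE'.
have e1 : 1 + (x - 1) * q = 1 + (s - q) by rewrite /x; field; lra.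
rewrite e1 in hb.
have hb2 : (1 + (s - q)) ^ N <= exp (INR N * (s - q)).
  rewrite -exp_pow_n; apply: pow_incr; split; first lra.
  exact: exp_ineq1_le.
have : @prob_event n N E * c <= exp (INR N * (s - q)) by lra.
move=> h.
have -> : exp (- (INR N * (s * ln x - s + q))) = exp (INR N * (s - q)) / c.
  rewrite /c /Rdiv -exp_Ropp -exp_plus; f_equal; ring.
apply: (Rmult_le_reg_r c) => //.
rewrite /Rdiv Rmult_assoc Rinv_l ?Rmult_1_r //; lra.
Qed.
Definition b m := INR (B m).

Lemma INRM m n : INR (m * n)%N = INR m * INR n.
Proof. by rewrite -multE mult_INR. Qed.
Lemma INRD m n : INR (m + n)%N = INR m + INR n.
Proof. by rewrite -plusE plus_INR. Qed.
Lemma INRX m n : INR (m ^ n)%N = INR m ^ n.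
Proof. elim: n => [|n IH]; first by []. by rewrite expnS INRM IH. Qed.


Lemma b_pos m : 0 < b m.
Proof. apply: lt_0_INR; apply/ltP; rewrite /B bin_gt0 -addnn; lia. Qed.

Lemma b_rec m : b m.+1 * INR m.+1 = 2 * (2 * INR m + 1) * b m.
Proof.
have := B_rec m; move/(f_equal INR); rewrite /b !INRM INRD INRM /=.
by rewrite -S_INR.
Qed.

Lemma b_lo m : (0 < m)%N -> 16 ^ m <= 4 * INR m * b m ^ 2.
Proof.
move=> hm; have := B_lo hm; move/leP/le_INR.
move=> h. rewrite INRX !INRM in h.
have e16 : INR 16 = 16 by rewrite INR_IZR_INZ. have e4 : INR 4 = 4 by rewrite INR_IZR_INZ.
rewrite e16 e4 in h; rewrite /b; lra.
Qed.

Lemma b_up m : b m ^ 2 * (2 * INR m + 1) <= 16 ^ m.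
Proof.
have := B_up m; move/leP/le_INR.
move=> h. rewrite INRX !INRM INRD INRM in h.
have e16 : INR 16 = 16 by rewrite INR_IZR_INZ. have e2 : INR 2 = 2 by rewrite INR_IZR_INZ.
rewrite e16 e2 in h; rewrite /b; simpl in h; lra.
Qed.

Lemma Codd m : INR 'C(m.*2.+1, m) = b m.+1 / 2.
Proof. rewrite /b -bin_odd INRM /=; field. Qed.

Lemma Ccen M : (0 < M)%N -> INR 'C(M.*2, M.-1) = INR M * b M / INR M.+1.
Proof.
move=> hM; have := bin_cen hM; move/(f_equal INR); rewrite !INRM => h.
rewrite /b -h; field. apply: not_0_INR => //.
Qed.

Lemma pform i j :
  p_ (i + j + 1).*2 i.*2.+1 =
  b j.+1 * b i.+1 * INR (i + j + 2) / (4 * INR (i + j + 1) * b (i + j + 1)).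
Proof.
rewrite /p_.
have e1 : ((i + j + 1).*2 - i.*2.+1)%N = j.*2.+1 by rewrite -!addnn; lia.
have e2 : (j.*2.+1).-1./2 = j by rewrite /= doubleK.
have e3 : (i.*2.+1).-1./2 = i by rewrite /= doubleK.
have e4 : ((i + j + 1).*2)./2.-1 = (i + j + 1).-1 by rewrite doubleK.
rewrite e1 e2 e3 e4 !Codd Ccen; last by lia.
have -> : (i + j + 1).+1 = (i + j + 2)%N by lia.
have hM : 0 < INR (i + j + 1) by apply: lt_0_INR; lia.
have hM2 : 0 < INR (i + j + 2) by apply: lt_0_INR; lia.
have := b_pos (i + j + 1). have := b_pos i.+1. have := b_pos j.+1.
move=> *; field; lra.
Qed.

Lemma pgap i j :
  p_ (i + j.+1 + 1).*2 i.*2.+1 - p_ (i + j.+1 + 1).*2 i.+1.*2.+1 =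
  p_ (i + j.+1 + 1).*2 i.*2.+1 * ((INR j - INR i) / ((INR i + 2) * (2 * INR j + 3))).
Proof.
rewrite [p_ _ i.*2.+1]pform.
have -> : (i + j.+1 + 1 = i.+1 + j + 1)%N by lia.
rewrite pform.
have -> : (i.+1 + j + 2 = i + j.+1 + 2)%N by lia.
have -> : (i.+1 + j + 1 = i + j.+1 + 1)%N by lia.
have r1 := b_rec i.+1. have r2 := b_rec j.+1.
rewrite !S_INR in r1 r2.
have := b_pos (i + j.+1 + 1). have := b_pos i.+1. have := b_pos j.+1.
have := b_pos i.+2. have := b_pos j.+2.
have hi := pos_INR i. have hj := pos_INR j.
have hM : 0 < INR (i + j.+1 + 1) by apply: lt_0_INR; lia.
move=> *.
have e1 : b i.+2 = 2 * (2 * (INR i + 1) + 1) * b i.+1 / (INR i + 1 + 1) by rewrite -r1; field; lra.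
have e2 : b j.+1 = b j.+2 * (INR j + 1 + 1) / (2 * (2 * (INR j + 1) + 1)) by rewrite r2; field; lra.
rewrite e1 e2. field; lra.
Qed.

Lemma plow i j : 1 <= 8 * INR i.+1 * p_ (i + j + 1).*2 i.*2.+1 ^ 2.
Proof.
rewrite pform.
set M := (i + j + 1)%N.
have hlo1 := b_lo (ltn0Sn i). have hlo2 := b_lo (ltn0Sn j). have hup := b_up M.
have hX : 16 ^ i.+1 * 16 ^ j.+1 = 16 * 16 ^ M by rewrite -pow_add tech_pow_Rmult; f_equal; rewrite /M; lia.
have := b_pos M. have := b_pos i.+1. have := b_pos j.+1.
have hM : INR M = INR i + INR j + 1 by rewrite /M !INRD /=; lra.
have hM2 : INR (i + j + 2) = INR M + 1 by rewrite /M !INRD /=; lra.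
rewrite hM2. rewrite !S_INR in hlo1 hlo2 *.
have hi := pos_INR i. have hj := pos_INR j.
have X0 : 0 < 16 ^ M by apply: pow_lt; lra.
move=> pj pi pM.
set X := 16 ^ M in X0 hX hup.
set A := b i.+1 in pi hlo1 *. set Bj := b j.+1 in pj hlo2 *. set C := b M in pM hup *.
set m := INR M in hM hup *.
have hm : 0 < m by rewrite hM; lra.
have hAB : 16 * X <= 16 * (INR i + 1) * (INR j + 1) * (A ^ 2 * Bj ^ 2).
  rewrite -hX.
  have := Rmult_le_compat _ _ _ _ (pow_le 16 i.+1 ltac:(lra)) (pow_le 16 j.+1 ltac:(lra)) hlo1 hlo2.
  move=> h; nra.
have hC : C ^ 2 * (2 * m + 1) <= X by [].
have key : 16 * m ^ 2 * C ^ 2 <= 8 * (INR i + 1) * (Bj * A * (m + 1)) ^ 2.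
  set D := (INR i + 1) * (A ^ 2 * Bj ^ 2).
  have D0 : 0 <= D by rewrite /D; apply: Rmult_le_pos; [lra | apply: Rmult_le_pos; apply: pow2_ge_0].
  have -> : 8 * (INR i + 1) * (Bj * A * (m + 1)) ^ 2 = 8 * (m + 1) ^ 2 * D by rewrite /D; ring.
  have hXD : X <= (INR j + 1) * D by rewrite /D; lra.
  have m2 : 0 <= 16 * m ^ 2 by have := pow2_ge_0 m; lra.
  have h1 : 16 * m ^ 2 * (C ^ 2 * (2 * m + 1)) <= 16 * m ^ 2 * X by apply: Rmult_le_compat_l.
  have h2 : 16 * m ^ 2 * X <= 16 * m ^ 2 * ((INR j + 1) * D) by apply: Rmult_le_compat_l.
  have h3 : (INR j + 1) * m ^ 2 * 2 <= (m + 1) ^ 2 * (2 * m + 1) by rewrite hM; nra.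
  have h3' : ((INR j + 1) * m ^ 2 * 2) * (8 * D) <= ((m + 1) ^ 2 * (2 * m + 1)) * (8 * D).
    by apply: Rmult_le_compat_r; lra.
  have h4 : 0 < 2 * m + 1 by lra.
  apply: (Rmult_le_reg_r (2 * m + 1)) => //.
  lra.
have -> : 8 * (INR i + 1) * (Bj * A * (m + 1) / (4 * m * C)) ^ 2
        = 8 * (INR i + 1) * (Bj * A * (m + 1)) ^ 2 / (16 * m ^ 2 * C ^ 2) by field; lra.
have hd : 0 < 16 * m ^ 2 * C ^ 2 by have := pow_lt m 2 hm; have := pow_lt C 2 pM; nra.
apply: (Rmult_le_reg_r (16 * m ^ 2 * C ^ 2)) => //.
set Dn := 16 * m ^ 2 * C ^ 2 in hd key *. set Nu := 8 * (INR i + 1) * (Bj * A * (m + 1)) ^ 2 in key *.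
have -> : Nu / Dn * Dn = Nu by field; lra. lra.
Qed.

Local Close Scope R_scope.
Lemma halfE x y : x = y.*2 -> x./2 = y.
Proof. by move=> ->; rewrite doubleK. Qed.

Lemma countG n (y : {ffun 'I_n -> bool}) M j0 :
  n = M.*2 -> ones y = j0.*2.+1 -> (ones y < n)%N ->
  #|[pred S : {set 'I_n} | (#|S| == (n./2).-1) && (ones (flip y S) == n./2)]|
  = ('C(ones y, j0) * 'C(n - ones y, M.-1 - j0))%N.
Proof.
move=> hn hw hlt.
have hM : n./2 = M by apply: halfE.
rewrite hM.
set A := [set i | y i].
have cA : #|A| = ones y by [].
have cAc : #|~: A| = (n - ones y)%N by have := cardsC A; rewrite card_ord cA; lia.
rewrite -cA -cAc -count_inter -cardsE.
apply: eq_card => S; rewrite !inE.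
have h := ones_flip y S. rewrite -/A in h.
have hM1 : (0 < M)%N by lia.
apply/idP/idP => /andP [/eqP hS /eqP ho]; apply/andP; split; apply/eqP. all: rewrite -!muln2 in hn hw; rewrite -?subn1 in hS *.
- rewrite hS; lia.
- rewrite ho hS hw in h. have hx : #|A :&: S| = j0 by lia. exact: hx.
- have hx : #|S| = M - 1 by lia. exact: hx.
- have ho' : #|A :&: S| = j0 := ho. have hS' : #|S| = j0 + (M - 1 - j0) := hS.
  have hx : ones (flip y S) = M by lia. exact: hx.
Qed.

Lemma ones_le n (y : {ffun 'I_n -> bool}) : (ones y <= n)%N.
Proof. by rewrite /ones -[X in (_ <= X)%N]card_ord max_card. Qed.

Lemma qq_p n (y : {ffun 'I_n -> bool}) a :
  ~~ odd n -> odd a -> minn (ones y) (n - ones y) = a -> (2 * a < n)%N ->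
  qq y = p_ n a.
Proof.
move=> hn ha hm ha2.
have hw := ones_le y.
set w := ones y in hm hw *.
have wodd : odd w by move: hm; rewrite /minn; case: ltnP => _ h; lia.
have wlt : (w < n)%N by move: hm; rewrite /minn; case: ltnP => _ h; lia.
rewrite /qq (@countG n y (n./2) (w./2)); [|lia|lia|lia].
rewrite /p_; f_equal.
rewrite -INRM; f_equal.
move: hm; rewrite /minn; case: ltnP => _ <-.
- rewrite mulnC; congr (_ * _); congr 'C(_, _); lia.
- have -> : (n - (n - w) = w)%N by lia.
  congr (_ * _); congr 'C(_, _); lia.
Qed.
Local Open Scope R_scope.
Lemma frac_le x y u v : 0 < y -> 0 < v -> x * v <= u * y -> x / y <= u / v.
Proof.
move=> hy hv h.
apply: (Rmult_le_reg_r (y * v)); first nra.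
have -> : x / y * (y * v) = x * v by field; lra.
have -> : u / v * (y * v) = u * y by field; lra.
done.
Qed.

Lemma ratio_up i j a n d : 0 <= i -> 0 <= j -> n = 2 * i + 2 * j + 4 -> a = 2 * i + 3 ->
  d = n - 2 * a -> 0 < d -> d / (8 * a * n) <= (j - i) / ((i + 2) * (2 * j + 3)).
Proof.
move=> hi hj hn ha hd d0.
apply: frac_le; try nra.
have h1 : (i + 2) * (2 * j + 3) <= a * n by subst; nra.
have h2 : d <= 2 * (j - i) by subst; lra.
have h3 : 0 <= a * n by subst; nra.
nra.
Qed.

Lemma ratio_lo i j a n d : 0 <= i -> 0 <= j -> n = 2 * i + 2 * j + 4 -> a = 2 * i + 1 ->
  d = n - 2 * a -> 4 <= d -> d / (8 * a * n) <= (j - i) / ((i + 2) * (2 * j + 3)).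
Proof.
move=> hi hj hn ha hd d0.
apply: frac_le; try nra.
have h1 : (i + 2) * (2 * j + 3) <= 2 * (a * n) by subst; nra.
have h2 : d <= 4 * (j - i) by subst; lra.
have h3 : 0 <= a * n by subst; nra.
nra.
Qed.

Lemma final_arith k a n d sa sd N pc g Ex :
  0 < k -> 0 < a -> 0 < n -> 0 < d -> sa * sa = a -> sd * sd = d -> 0 < sa -> 0 < sd ->
  0 < pc -> 1 <= 3 * sa * pc -> pc * (d / (8 * a * n)) <= g -> 0 <= N ->
  N * (g ^ 2 / (16 * pc)) <= Ex ->
  3072 * k * (a ^ 2 * sa) * n ^ 2 / (d * sd) <= N -> k * sd <= Ex.
Proof.
move=> hk ha hn hd hsa hsd sa0 sd0 hpc h3 hg hN hE hNK.
have g0 : 0 <= pc * (d / (8 * a * n)).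
  apply: Rmult_le_pos; first lra. apply: Rlt_le; apply: Rdiv_lt_0_compat => //; nra.
have hg2 : (pc * (d / (8 * a * n))) ^ 2 <= g ^ 2 by apply: pow_incr; lra.
have e1 : N * ((pc * (d / (8 * a * n))) ^ 2 / (16 * pc)) = N * pc * d ^ 2 / (1024 * a ^ 2 * n ^ 2).
  field; lra.
have h4 : N * ((pc * (d / (8 * a * n))) ^ 2 / (16 * pc)) <= N * (g ^ 2 / (16 * pc)).
  apply: Rmult_le_compat_l => //. apply: Rmult_le_compat_r => //.
  apply: Rlt_le; apply: Rinv_0_lt_compat; lra.
rewrite e1 in h4.
have hN2 : 3072 * k * (a ^ 2 * sa) * n ^ 2 <= N * (d * sd).
  have hds : 0 < d * sd by apply: Rmult_lt_0_compat.
  have := Rmult_le_compat_r (d * sd) _ _ (Rlt_le _ _ hds) hNK.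
  have -> : 3072 * k * (a ^ 2 * sa) * n ^ 2 / (d * sd) * (d * sd) = 3072 * k * (a ^ 2 * sa) * n ^ 2 by field; lra.
  done.
have key : k * sd <= N * pc * d ^ 2 / (1024 * a ^ 2 * n ^ 2).
  have den : 0 < 1024 * a ^ 2 * n ^ 2 by have := pow_lt a 2 ha; have := pow_lt n 2 hn; nra.
  apply: (Rmult_le_reg_r (1024 * a ^ 2 * n ^ 2)) => //.
  have -> : N * pc * d ^ 2 / (1024 * a ^ 2 * n ^ 2) * (1024 * a ^ 2 * n ^ 2) = N * pc * d ^ 2 by field; lra.
  (* N pc d^2 >= (3072 k a^2 sa n^2/(d sd)) * pc * d^2 = 3072 k a^2 n^2 sa pc d / sd ; sa pc >= 1/3 ; d/sd = sd *)
  have hA : 3072 * k * (a ^ 2 * sa) * n ^ 2 * (pc * d) <= N * (d * sd) * (pc * d).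
    apply: Rmult_le_compat_r => //; nra.
  have hB : k * sd * (1024 * a ^ 2 * n ^ 2) * sd <= 3072 * k * (a ^ 2 * sa) * n ^ 2 * (pc * d).
    have -> : k * sd * (1024 * a ^ 2 * n ^ 2) * sd = 1024 * k * a ^ 2 * n ^ 2 * (sd * sd) by ring.
    rewrite hsd.
    have -> : 3072 * k * (a ^ 2 * sa) * n ^ 2 * (pc * d) = 1024 * k * a ^ 2 * n ^ 2 * d * (3 * sa * pc) by ring.
    have hp : 0 < 1024 * k * a ^ 2 * n ^ 2 * d by have := pow_lt a 2 ha; have := pow_lt n 2 hn; move=> *; repeat apply: Rmult_lt_0_compat => //; lra.
    have := Rmult_le_compat_l _ _ _ (Rlt_le _ _ hp) h3. lra.
  apply: (Rmult_le_reg_r sd) => //.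
  have -> : N * pc * d ^ 2 * sd = N * (d * sd) * (pc * d) by ring.
  lra.
lra.
Qed.

Lemma ppos i j : 0 < p_ (i + j + 1).*2 i.*2.+1.
Proof.
rewrite pform.
have := b_pos (i + j + 1). have := b_pos i.+1. have := b_pos j.+1.
have : 0 < INR (i + j + 2) by apply: lt_0_INR; lia.
have : 0 < INR (i + j + 1) by apply: lt_0_INR; lia.
move=> *. apply: Rdiv_lt_0_compat; repeat apply: Rmult_lt_0_compat => //; lra.
Qed.

Lemma INR_double x : INR x.*2 = 2 * INR x.
Proof. by rewrite -muln2 INRM /=; ring. Qed.

Lemma Rpow52 x : 0 < x -> Rpower x (5 / 2) = x ^ 2 * sqrt x.
Proof.
move=> hx.
have -> : 5 / 2 = INR 2 + / 2 by rewrite /=; field.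
by rewrite Rpower_plus Rpower_pow // Rpower_sqrt.
Qed.

Lemma Rpow32 x : 0 < x -> Rpower x (3 / 2) = x * sqrt x.
Proof.
move=> hx.
have -> : 3 / 2 = 1 + / 2 by field.
by rewrite Rpower_plus Rpower_1 // Rpower_sqrt.
Qed.

Lemma ln_le x y : 0 < x -> x <= y -> ln x <= ln y.
Proof.
move=> hx h; case: (Rle_lt_or_eq_dec _ _ h) => [h'|->]; last by apply: Rle_refl.
by apply: Rlt_le; apply: ln_increasing.
Qed.

Theorem lemma17 :
  forall k : R, 0 < k ->
  exists K : R,
  forall n : nat, ~~ odd n ->
  forall a : nat, odd a -> (1 <= a)%N -> (2 * a < n)%N ->
  forall y : {ffun 'I_n -> bool}, minn (ones y) (n - ones y)%N = a ->
  forall N : nat,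
    K * Rpower (INR a) (5/2) * INR n ^ 2
       / Rpower (INR n - 2 * INR a) (3/2) <= INR N ->
    ((3 <= a)%N ->
      @prob_event n N
         (fun f => Defs.Rleb (INR N * (p_ n a + p_ n (a - 2)%N) / 2)
                        (INR (Ycount y f)))
       <= exp (- (k * sqrt (INR n - 2 * INR a)))) /\
    ((a <= n./2 - 2)%N ->
      @prob_event n N
         (fun f => Defs.Rleb (INR (Ycount y f))
                        (INR N * (p_ n (a + 2)%N + p_ n a) / 2))
       <= exp (- (k * sqrt (INR n - 2 * INR a)))).
Proof.
move=> k hk; exists (3072 * k).
move=> n hn a ha a1 h2a y hy N hN.
have hT : (0 < 'C(n, (n./2).-1))%N by rewrite bin_gt0; lia.
have hq : qq y = p_ n a by apply: qq_p.
have hA0 : 0 < INR a by apply: lt_0_INR; lia.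
have hn0 : 0 < INR n by apply: lt_0_INR; lia.
have hd : 0 < INR n - 2 * INR a.
  have : INR (2 * a) < INR n by apply: lt_INR; lia.
  rewrite INRM /=; lra.
set d := INR n - 2 * INR a in hd hN *.
rewrite Rpow52 // Rpow32 // in hN.
set sa := sqrt (INR a) in hN *. set sd := sqrt d in hN *.
have sa0 : 0 < sa by apply: sqrt_lt_R0.
have sd0 : 0 < sd by apply: sqrt_lt_R0.
have hsa : sa * sa = INR a by apply: sqrt_sqrt; lra.
have hsd : sd * sd = d by apply: sqrt_sqrt; lra.
have hN0 := pos_INR N.
split.
- move=> a3.
  have [i0 ei] : exists i0, a = i0.+1.*2.+1 by exists (a./2 - 1)%N; lia.
  have [j ej] : exists j, n = (i0 + j.+1 + 1).*2 by exists (n./2 - i0 - 2)%N; lia.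
  have ea : p_ n a = p_ (i0 + j.+1 + 1).*2 i0.+1.*2.+1 by rewrite ej ei.
  have ea2 : p_ n (a - 2) = p_ (i0 + j.+1 + 1).*2 i0.*2.+1.
    by rewrite ej ei; f_equal; lia.
  set pc := p_ (i0 + j.+1 + 1).*2 i0.*2.+1 in ea2.
  have pc0 : 0 < pc by apply: ppos.
  have q0 : 0 < p_ n a.
    rewrite ea; have -> : (i0 + j.+1 + 1 = i0.+1 + j + 1)%N by lia. apply: ppos.
  have hgap := pgap i0 j. rewrite -/pc -ea in hgap.
  set q := p_ n a in hq q0 hgap *.
  have eN : INR n = 2 * INR i0 + 2 * INR j + 4.
    rewrite ej INR_double !INRD !S_INR /=; lra.
  have eA : INR a = 2 * INR i0 + 3.
    rewrite ei S_INR INR_double S_INR; lra.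
  have hr := ratio_up (pos_INR i0) (pos_INR j) eN eA (erefl d) hd.
  have hg : pc * (d / (8 * INR a * INR n)) <= pc - q.
    rewrite hgap; apply: Rmult_le_compat_l; lra.
  have hpl := plow i0 j.+1. rewrite -/pc in hpl.
  have hi : INR i0.+1 <= INR a by apply: le_INR; lia.
  have h3 : 1 <= 3 * sa * pc.
    have h9 : 1 <= (3 * sa * pc) ^ 2.
      have -> : (3 * sa * pc) ^ 2 = 9 * (sa * sa) * pc ^ 2 by ring.
      rewrite hsa. have := pow2_ge_0 pc. nra.
    have : 0 < 3 * sa * pc by nra.
    nra.
  set s := (q + p_ n (a - 2)) / 2.
  have es : s = (q + pc) / 2 by rewrite /s ea2.
  have hg0 : 0 <= pc * (d / (8 * INR a * INR n)).
    apply: Rmult_le_pos; first lra. apply: Rlt_le; apply: Rdiv_lt_0_compat => //.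
    apply: Rmult_lt_0_compat => //; lra.
  have hqs : q <= s by rewrite es; lra.
  have s0 : 0 < s by rewrite es; lra.
  have := @chernoff_gen n N y (fun f => Defs.Rleb (INR N * (q + p_ n (a - 2)%N) / 2) (INR (Ycount y f))) s hT.
  rewrite hq => hc.
  have {}hc := hc q0 s0.
  have hc' : prob_event (n:=n) (N:=N) (fun f => Defs.Rleb (INR N * (q + p_ n (a - 2)%N) / 2) (INR (Ycount y f)))
      <= exp (- (INR N * (s * ln (s / q) - s + q))).
    apply: hc => f; rewrite /Defs.Rleb; case: Rle_dec => // hle _.
    have hl : 0 <= ln (s / q).
      rewrite -ln_1; apply: ln_le; first lra.
      apply: (Rmult_le_reg_r q) => //. rewrite Rmult_1_l /Rdiv Rmult_assoc Rinv_l; lra.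
    apply: Rmult_le_pos => //. rewrite /s; lra.
  apply: (Rle_trans _ _ _ hc'); apply: exp_mono; apply: Ropp_le_contravar.
  have hkl := kl_up q0 hqs.
  have hE : INR N * ((pc - q) ^ 2 / (16 * pc)) <= INR N * (s * ln (s / q) - s + q).
    apply: Rmult_le_compat_l => //.
    apply: Rle_trans hkl.
    have -> : (s - q) ^ 2 / (4 * s) = (pc - q) ^ 2 / (16 * s) by rewrite es; field; lra.
    apply: Rmult_le_compat_l; first by apply: pow2_ge_0.
    apply: Rinv_le_contravar; rewrite ?es; lra.
  apply: (final_arith hk hA0 hn0 hd hsa hsd sa0 sd0 pc0 h3 hg hN0 hE).
  exact: hN.
- move=> a3.
  have [i ei] : exists i, a = i.*2.+1 by exists (a./2)%N; lia.
  have [j ej] : exists j, n = (i + j.+1 + 1).*2 by exists (n./2 - i - 2)%N; lia.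
  have ea : p_ n a = p_ (i + j.+1 + 1).*2 i.*2.+1 by rewrite ej ei.
  have ea2 : p_ n (a + 2) = p_ (i + j.+1 + 1).*2 i.+1.*2.+1.
    by rewrite ej ei; f_equal; lia.
  have pc0 : 0 < p_ n a by rewrite ea; apply: ppos.
  have q0 : 0 < p_ n (a + 2).
    rewrite ea2; have -> : (i + j.+1 + 1 = i.+1 + j + 1)%N by lia. apply: ppos.
  have hgap := pgap i j. rewrite -ea -ea2 in hgap.
  have hpl := plow i j.+1. rewrite -ea in hpl.
  set pc := p_ n a in hq pc0 hgap hpl *.
  set q2 := p_ n (a + 2) in q0 hgap *.
  have eN : INR n = 2 * INR i + 2 * INR j + 4.
    rewrite ej INR_double !INRD !S_INR /=; lra.
  have eA : INR a = 2 * INR i + 1.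
    rewrite ei S_INR INR_double; lra.
  have hd4 : 4 <= d.
    have : (INR (a + 2) * 2 <= INR n).
      have : (INR ((a + 2) * 2) <= INR n) by apply: le_INR; lia.
      by rewrite INRM.
    rewrite INRD /=; rewrite /d; lra.
  have hr := ratio_lo (pos_INR i) (pos_INR j) eN eA (erefl d) hd4.
  have hg : pc * (d / (8 * INR a * INR n)) <= pc - q2.
    rewrite hgap; apply: Rmult_le_compat_l; lra.
  have hi : INR i.+1 <= INR a by apply: le_INR; lia.
  have h3 : 1 <= 3 * sa * pc.
    have h9 : 1 <= (3 * sa * pc) ^ 2.
      have -> : (3 * sa * pc) ^ 2 = 9 * (sa * sa) * pc ^ 2 by ring.
      rewrite hsa. have := pow2_ge_0 pc. nra.
    have : 0 < 3 * sa * pc by nra.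
    nra.
  set s := (q2 + pc) / 2.
  have es : s = (q2 + pc) / 2 by [].
  have hg0 : 0 <= pc * (d / (8 * INR a * INR n)).
    apply: Rmult_le_pos; first lra. apply: Rlt_le; apply: Rdiv_lt_0_compat => //.
    apply: Rmult_lt_0_compat => //; lra.
  have hqs : s <= pc by rewrite es; lra.
  have s0 : 0 < s by rewrite es; lra.
  have := @chernoff_gen n N y (fun f => Defs.Rleb (INR (Ycount y f)) (INR N * (q2 + pc) / 2)) s hT.
  rewrite hq => hc.
  have {}hc := hc pc0 s0.
  have hc' : prob_event (n:=n) (N:=N) (fun f => Defs.Rleb (INR (Ycount y f)) (INR N * (q2 + pc) / 2))
      <= exp (- (INR N * (s * ln (s / pc) - s + pc))).
    apply: hc => f; rewrite /Defs.Rleb; case: Rle_dec => // hle _.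
    have hl : ln (s / pc) <= 0.
      rewrite -ln_1; apply: ln_le; first by apply: Rdiv_lt_0_compat.
      apply: (Rmult_le_reg_r pc) => //. rewrite Rmult_1_l /Rdiv Rmult_assoc Rinv_l; lra.
    have : INR (Ycount y f) - INR N * s <= 0 by rewrite /s; lra.
    nra.
  apply: (Rle_trans _ _ _ hc'); apply: exp_mono; apply: Ropp_le_contravar.
  have hkl := kl_lo s0 hqs.
  have hE : INR N * ((pc - q2) ^ 2 / (16 * pc)) <= INR N * (s * ln (s / pc) - s + pc).
    apply: Rmult_le_compat_l => //.
    apply: Rle_trans hkl.
    have -> : (pc - s) ^ 2 / (4 * pc) = (pc - q2) ^ 2 / (16 * pc) by rewrite es; field; lra.
    apply: Rle_refl.
  apply: (final_arith hk hA0 hn0 hd hsa hsd sa0 sd0 pc0 h3 hg hN0 hE).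
  exact: hN.
Qed.
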